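(* Let $0<q<1$. Define the $q$-Genocchi numbers $g_{n,q}$ and $q$-Genocchi polynomials $G_{n,q}(x)$ by \[ \frac{2t}{e_q(t)+1}=\sum_{n=0}^\infty g_{n,q}\frac{t^n}{[n]_q!},\qquad \frac{2t}{e_q(t)+1}e_q(tx)=\sum_{n=0}^\infty G_{n,q}(x)\frac{t^n}{[n]_q!} \] (for $t$ in a neighborhood of $0$). Then for every integer $n\ge1$, \[ \frac{1}{2q}\sum_{k=0}^{n-2}\begin{bmatrix}n\\k\end{bmatrix}_q g_{n-k,q}\,q^kG_{k,q}(x)+[n]_q\left(xq-\frac{1}{2q}\right)q^{n-1}G_{n-1,q}(x)+q^{n-1}G_{n,q}(x)-[n]_qG_{n,q}(qx)=0. \]
   Context: $[n]_q=\frac{1-q^n}{1-q}$, $[0]_q!=1$, $[n]_q!=[n]_q\cdots[1]_q$, $\begin{bmatrix}n\\k\end{bmatrix}_q=\frac{[n]_q!}{[k]_q![n-k]_q!}$, and $e_q(t)=\sum_{n\ge0}\frac{t^n}{[n]_q!}$. *)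

(* Defs.v *)
From Stdlib Require Import Reals.
From Coquelicot Require Import Coquelicot.
Open Scope R_scope.

Definition qint (q : R) (n : nat) : R := (1 - q ^ n) / (1 - q).

Fixpoint qfact (q : R) (n : nat) : R :=
  match n with
  | O => 1
  | S m => qint q (S m) * qfact q m
  end.

Definition qbinom (q : R) (n k : nat) : R :=
  qfact q n / (qfact q k * qfact q (n - k)).

Definition eq_exp (q t : R) : R := Series (fun n => t ^ n / qfact q n).

Fixpoint sum_lt (f : nat -> R) (m : nat) : R :=
  match m with
  | O => 0
  | S p => sum_lt f p + f p
  end.

(* Main.v *)
Require Import Defs.
From Stdlib Require Import Reals Lra Lia Arith.
From Coquelicot Require Import Coquelicot.
Open Scope R_scope.

Lemma ex_series_bounded (u : nat -> R) : ex_series u -> exists M, forall n, Rabs (u n) <= M.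
Proof.
  intros Hu. apply ex_series_lim_0 in Hu. apply is_lim_seq_spec in Hu.
  destruct (Hu (mkposreal 1 Rlt_0_1)) as [N HN]. simpl in HN.
  exists (1 + sum_f_R0 (fun k => Rabs (u k)) N). intros n.
  destruct (le_lt_dec N n) as [h|h].
  - specialize (HN n h). rewrite Rminus_0_r in HN.
    assert (0 <= sum_f_R0 (fun k => Rabs (u k)) N).
    { apply cond_pos_sum. intros; apply Rabs_pos. }
    lra.
  - assert (Rabs (u n) <= sum_f_R0 (fun k => Rabs (u k)) N).
    { clear HN. assert (hh : (n <= N)%nat) by lia. clear h. induction N.
      - replace n with 0%nat by lia. simpl. lra.
      - destruct (Nat.eq_dec n (S N)) as [->|hn].
        + simpl. assert (0 <= sum_f_R0 (fun k => Rabs (u k)) N).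
          { apply cond_pos_sum. intros; apply Rabs_pos. } lra.
        + simpl. assert (Rabs (u n) <= sum_f_R0 (fun k => Rabs (u k)) N) by (apply IHN; lia).
          pose proof (Rabs_pos (u (S N))). lra. }
    lra.
Qed.

Lemma radius_of (a : nat -> R) (eps : R) :
  (forall t, Rabs t < eps -> ex_series (fun n => a n * t ^ n)) ->
  forall t, Rabs t < eps -> Rbar_lt (Rabs t) (CV_radius a).
Proof.
  intros H t Ht.
  set (r := (Rabs t + eps) / 2).
  assert (Hr : Rabs r < eps).
  { pose proof (Rabs_pos t). unfold r. rewrite Rabs_pos_eq; lra. }
  destruct (ex_series_bounded _ (H r Hr)) as [M HM].
  assert (Rbar_le r (CV_radius a)).
  { destruct (CV_radius_bounded a) as [Hub _]. apply Hub. exists M. exact HM. }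
  destruct (CV_radius a) as [c| |]; simpl in *; try tauto.
  pose proof (Rabs_pos t). unfold r in H0. lra.
Qed.

Lemma ps_near0 (a : nat -> R) : Rbar_lt 0 (CV_radius a) ->
  forall e, 0 < e -> exists d, 0 < d /\ forall t, Rabs t < d -> Rabs (PSeries a t - a 0%nat) < e.
Proof.
  intros Hr e He.
  assert (Hc : continuity_pt (PSeries a) 0).
  { apply PSeries_continuity. rewrite Rabs_R0. exact Hr. }
  destruct (Hc e He) as [d [Hd Hd']].
  exists d. split; [exact Hd|]. intros t Ht.
  destruct (Req_dec t 0) as [->|Ht0].
  - rewrite PSeries_0, Rminus_diag, Rabs_R0. exact He.
  - rewrite <- (PSeries_0 a). apply (Hd' t). split.
    + split; [exact I| congruence].
    + simpl. unfold R_dist. rewrite Rminus_0_r. exact Ht.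
Qed.

Lemma ps_unique (a : nat -> R) (eps : R) : 0 < eps ->
  (forall t, Rabs t < eps -> is_series (fun n => a n * t ^ n) 0) ->
  forall n, a n = 0.
Proof.
  intros He H n. induction n as [n IH] using lt_wf_ind.
  set (b := fun k => a (n + k)%nat).
  assert (Hb : forall t, Rabs t < eps -> t <> 0 -> is_series (fun k => b k * t ^ k) 0).
  { intros t Ht Ht0. specialize (H t Ht).
    assert (H2 : is_series (fun k => a (n + k)%nat * t ^ (n + k)) 0).
    { destruct n as [|n'].
      - simpl. exact H.
      - apply (is_series_incr_n (fun k => a k * t ^ k) (S n') 0). lia.
        assert (Hs : sum_n (fun k => a k * t ^ k) n' = 0).
        { rewrite <- (sum_n_ext_loc (fun _ => 0)).
          * rewrite sum_n_Reals. clear. induction n'; simpl; [reflexivity| rewrite IHn'; ring].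
          * intros k hk. simpl. rewrite (IH k) by lia. ring. }
        simpl Init.Nat.pred. rewrite sum_n_Reals in Hs.
        match goal with |- is_series _ ?l => replace l with 0; [exact H|] end.
        unfold plus; simpl. rewrite sum_n_Reals. rewrite Hs. ring. }
    apply (is_series_scal_l (/ t ^ n)) in H2.
    unfold scal in H2; simpl in H2; unfold mult in H2; simpl in H2.
    rewrite Rmult_0_r in H2.
    eapply is_series_ext; [|exact H2]. intros k. simpl. unfold b.
    rewrite pow_add. field. apply pow_nonzero. exact Ht0. }
  assert (Hps : forall t, Rabs t < eps -> t <> 0 -> PSeries b t = 0).
  { intros t Ht Ht0. unfold PSeries. apply is_series_unique. apply Hb; assumption. }
  assert (Hrad : Rbar_lt 0 (CV_radius b)).
  { assert (Hr := radius_of b eps). rewrite <- Rabs_R0. apply Hr.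
    - intros t Ht. destruct (Req_dec t 0) as [->|Ht0].
      + apply ex_series_Rabs. apply CV_disk_0.
      + eexists. apply Hb; assumption.
    - rewrite Rabs_R0. exact He. }
  destruct (Req_dec (b 0%nat) 0) as [Hz|Hnz].
  - unfold b in Hz. rewrite Nat.add_0_r in Hz. exact Hz.
  - exfalso. destruct (ps_near0 b Hrad (Rabs (b 0%nat))) as [d [Hd Hd']].
    + apply Rabs_pos_lt. exact Hnz.
    + set (t := Rmin d eps / 2).
      assert (Ht0 : 0 < t). { unfold t. pose proof (Rmin_glb_lt d eps 0 Hd He). lra. }
      assert (Htd : Rabs t < d /\ Rabs t < eps).
      { rewrite Rabs_pos_eq by lra. unfold t. pose proof (Rmin_l d eps). pose proof (Rmin_r d eps). lra. }
      specialize (Hd' t (proj1 Htd)). rewrite Hps in Hd' by (tauto || lra).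
      rewrite Rminus_0_l, Rabs_Ropp in Hd'. lra.
Qed.

Lemma ps_mult (a b : nat -> R) (A B : R -> R) (e1 e2 : R) :
  (forall t, Rabs t < e1 -> is_series (fun n => a n * t ^ n) (A t)) ->
  (forall t, Rabs t < e2 -> is_series (fun n => b n * t ^ n) (B t)) ->
  forall t, Rabs t < e1 -> Rabs t < e2 ->
  is_series (fun n => PS_mult a b n * t ^ n) (A t * B t).
Proof.
  intros Ha Hb t H1 H2.
  assert (Ra : Rbar_lt (Rabs t) (CV_radius a)).
  { apply (radius_of a e1); [|exact H1]. intros s Hs. eexists. apply Ha. exact Hs. }
  assert (Rb : Rbar_lt (Rabs t) (CV_radius b)).
  { apply (radius_of b e2); [|exact H2]. intros s Hs. eexists. apply Hb. exact Hs. }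
  pose proof (is_series_mult _ _ _ _ (Ha t H1) (Hb t H2) (CV_disk_inside _ _ Ra) (CV_disk_inside _ _ Rb)) as HM.
  eapply is_series_ext; [|exact HM]. intros n. simpl.
  unfold PS_mult. rewrite Rmult_comm, scal_sum. apply sum_eq. intros i hi.
  assert (Hp : t ^ n = t ^ i * t ^ (n - i)) by (rewrite <- pow_add; f_equal; lia). rewrite Hp. ring.
Qed.

Lemma qint_ge1 (q : R) (m : nat) : 0 < q < 1 -> 1 <= qint q (S m).
Proof.
  intros Hq. unfold qint.
  assert (0 <= q ^ m <= 1).
  { induction m; simpl; [lra|]. split; [apply Rmult_le_pos; lra| nra]. }
  apply Rmult_le_reg_r with (1 - q); [lra|].
  unfold Rdiv. rewrite Rmult_assoc, Rinv_l by lra. simpl. nra.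
Qed.

Lemma qfact_ge1 (q : R) (n : nat) : 0 < q < 1 -> 1 <= qfact q n.
Proof.
  intros Hq. induction n; simpl; [lra|].
  pose proof (qint_ge1 q n Hq). nra.
Qed.

Lemma E_series (q t : R) : 0 < q < 1 -> Rabs t < 1 ->
  is_series (fun n => t ^ n / qfact q n) (eq_exp q t).
Proof.
  intros Hq Ht. apply Series_correct.
  apply (@ex_series_le R_AbsRing R_CompleteNormedModule _ (fun n => Rabs t ^ n)).
  - intros n. change (norm (t ^ n / qfact q n)) with (Rabs (t ^ n / qfact q n)).
    pose proof (qfact_ge1 q n Hq).
    unfold Rdiv. rewrite Rabs_mult, Rabs_inv, <- RPow_abs.
    rewrite (Rabs_pos_eq (qfact q n)) by lra.
    pose proof (pow_le (Rabs t) n (Rabs_pos t)).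
    apply Rle_trans with (Rabs t ^ n * 1); [|lra].
    apply Rmult_le_compat_l; [lra|].
    rewrite <- Rinv_1. apply Rinv_le_contravar; lra.
  - apply ex_series_geom. rewrite Rabs_Rabsolu. exact Ht.
Qed.

Lemma E_shift (q t : R) : 0 < q < 1 -> Rabs t < 1 ->
  eq_exp q (q * t) = eq_exp q t * (1 - (1 - q) * t).
Proof.
  intros Hq Ht.
  assert (Hqt : Rabs (q * t) < 1).
  { rewrite Rabs_mult, Rabs_pos_eq by lra. pose proof (Rabs_pos t). nra. }
  pose proof (E_series q t Hq Ht) as E1.
  pose proof (E_series q (q * t) Hq Hqt) as E2.
  pose proof (is_series_minus _ _ _ _ E1 E2) as E3.
  assert (E4 : is_series (fun n => t ^ n / qfact q n - (q * t) ^ n / qfact q n)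
                 ((1 - q) * t * eq_exp q t)).
  { apply is_series_decr_1.
    apply (is_series_scal_l ((1 - q) * t)) in E1.
    eapply is_series_ext; [|
      match goal with |- is_series _ ?l =>
        replace l with (scal ((1 - q) * t) (eq_exp q t)); [exact E1|] end].
    - intros n. unfold scal; simpl; unfold mult; simpl.
      unfold qint. rewrite Rpow_mult_distr.
      assert (1 - q ^ S n <> 0).
      { assert (0 <= q ^ n <= 1).
        { clear -Hq. induction n; simpl; [lra|]. split; [apply Rmult_le_pos; lra| nra]. }
        simpl. nra. }
      pose proof (qfact_ge1 q n Hq).
      simpl. field. repeat split; try lra. simpl in H. lra.
    - unfold plus, opp, scal; simpl; unfold mult; simpl. field. }
  assert (E5 : is_series (fun n => t ^ n / qfact q n - (q * t) ^ n / qfact q n)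
                 (eq_exp q t - eq_exp q (q * t))).
  { eapply is_series_ext; [|exact E3]. intros n. reflexivity. }
  pose proof (is_series_unique _ _ E4) as U4.
  pose proof (is_series_unique _ _ E5) as U5.
  rewrite U5 in U4. lra.
Qed.

Lemma E_pos (q : R) : 0 < q < 1 ->
  exists d, 0 < d /\ forall t, Rabs t < d -> 0 < eq_exp q t.
Proof.
  intros Hq. set (a := fun n => / qfact q n).
  assert (Hs : forall t, Rabs t < 1 -> is_series (fun n => a n * t ^ n) (eq_exp q t)).
  { intros t Ht. apply (is_series_ext (fun n => t ^ n / qfact q n)); [|apply (E_series q t Hq Ht)].
    intros n. simpl. unfold a, Rdiv. ring. }
  assert (Hr : Rbar_lt 0 (CV_radius a)).
  { rewrite <- Rabs_R0. apply (radius_of a 1).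
    - intros t Ht. eexists. apply Hs. exact Ht.
    - rewrite Rabs_R0. lra. }
  destruct (ps_near0 a Hr (1/2)) as [d [Hd Hd']]; [lra|].
  exists (Rmin d 1). split. { apply Rmin_glb_lt; lra. }
  intros t Ht. pose proof (Rmin_l d 1). pose proof (Rmin_r d 1).
  specialize (Hd' t ltac:(lra)).
  assert (PSeries a t = eq_exp q t).
  { unfold PSeries. apply is_series_unique. apply Hs. lra. }
  assert (a 0%nat = 1). { unfold a. simpl. apply Rinv_1. }
  rewrite H1, H2 in Hd'. apply Rabs_def2 in Hd'. lra.
Qed.

Lemma ser_lin2 (a b : nat -> R) (A B u v : R) :
  is_series a A -> is_series b B ->
  is_series (fun k => u * a k + v * b k) (u * A + v * B).
Proof.
  intros Ha Hb.
  pose proof (is_series_plus _ _ _ _ (is_series_scal_l u _ _ Ha) (is_series_scal_l v _ _ Hb)) as H.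
  exact H.
Qed.

Lemma is_series_zero : is_series (fun _ : nat => 0) 0.
Proof.
  pose proof (is_series_scal_l 0 _ _ (is_series_geom (1/2) ltac:(rewrite Rabs_pos_eq; lra))) as H.
  unfold scal in H; simpl in H; unfold mult in H; simpl in H.
  rewrite Rmult_0_l in H.
  apply (is_series_ext (fun n => 0 * (1/2)^n)); [intros; simpl; ring| exact H].
Qed.

Definition cseq (k : nat) : R := match k with 1%nat => 2 | _ => 0 end.

Lemma is_series_c (t : R) : is_series (fun k => cseq k * t ^ k) (2 * t).
Proof.
  apply is_series_decr_1. apply is_series_decr_1.
  simpl. unfold plus, opp; simpl.
  replace (2 * t + - (0 * 1) + - (2 * (t * 1))) with 0 by ring.
  apply (is_series_ext (fun _ => 0)); [intros; simpl; ring| exact is_series_zero].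
Qed.

Lemma sum_lt_R0 (f : nat -> R) (m : nat) : sum_lt f (S m) = sum_f_R0 f m.
Proof. induction m; simpl in *; [ring| rewrite IHm; reflexivity]. Qed.

Lemma sum_lt_scale (f h : nat -> R) (c : R) (m : nat) :
  (forall k, (k < m)%nat -> f k = c * h k) -> sum_lt f m = c * sum_lt h m.
Proof.
  induction m; intros Hk; simpl; [ring|].
  rewrite IHm by (intros; apply Hk; lia). rewrite Hk by lia. ring.
Qed.

Lemma sum_lt_S (f : nat -> R) (m : nat) : sum_lt f (S m) = sum_lt f m + f m.
Proof. reflexivity. Qed.

Theorem theorem7 (q : R) (g : nat -> R) (G : nat -> R -> R) :
  0 < q < 1 ->
  (* g_{n,q}: 2t/(e_q(t)+1) = sum g_{n,q} t^n/[n]_q!  near 0 *)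
  (exists eps : R, 0 < eps /\
     forall t : R, Rabs t < eps ->
       is_series (fun n => g n * t ^ n / qfact q n)
                 (2 * t / (eq_exp q t + 1))) ->
  (* G_{n,q}(x): 2t/(e_q(t)+1) e_q(tx) = sum G_{n,q}(x) t^n/[n]_q!  near 0 *)
  (forall x : R, exists eps : R, 0 < eps /\
     forall t : R, Rabs t < eps ->
       is_series (fun n => G n x * t ^ n / qfact q n)
                 (2 * t / (eq_exp q t + 1) * eq_exp q (t * x))) ->
  forall (n : nat) (x : R), (1 <= n)%nat ->
    / (2 * q) * sum_lt (fun k => qbinom q n k * g (n - k)%nat * q ^ k * G k x) (n - 1)
    + qint q n * (x * q - / (2 * q)) * q ^ (n - 1) * G (n - 1)%nat x
    + q ^ (n - 1) * G n x
    - qint q n * G n (q * x) = 0.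
Proof.
  intros Hq [e1 [He1 H1]] H2 n x Hn.
  destruct (H2 x) as [e2 [He2 Hx]].
  destruct (H2 (q * x)) as [e3 [He3 Hqx]].
  destruct (E_pos q Hq) as [d0 [Hd0 Hpos]].
  set (f := fun t => 2 * t / (eq_exp q t + 1)).
  set (F := fun t y => 2 * t / (eq_exp q t + 1) * eq_exp q (t * y)).
  set (ga := fun k => g k / qfact q k).
  set (Gx := fun k => G k x / qfact q k).
  set (Gqx := fun k => G k (q * x) / qfact q k).
  set (a1 := fun k => q ^ k * Gx k).
  set (Hs := fun k => match k with O => 0 | S j => a1 j end).
  set (M := fun k => / (2 * q) * PS_mult a1 ga k + (x * q - / q) * Hs k + / q * a1 k
                     - (1 - q ^ k) / (1 - q) * Gqx k).
  assert (Hqf : forall k, qfact q k <> 0).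
  { intros k. pose proof (qfact_ge1 q k Hq). lra. }
  assert (Rq : forall t, Rabs (q * t) <= Rabs t).
  { intros t. rewrite Rabs_mult, Rabs_pos_eq by lra. pose proof (Rabs_pos t). nra. }
  assert (Sga : forall t, Rabs t < e1 -> is_series (fun k => ga k * t ^ k) (f t)).
  { intros t Ht. apply (is_series_ext (fun n => g n * t ^ n / qfact q n)); [|apply H1; exact Ht].
    intros k; simpl. unfold ga, Rdiv. ring. }
  assert (Sa1 : forall t, Rabs t < e2 -> is_series (fun k => a1 k * t ^ k) (F (q * t) x)).
  { intros t Ht. apply (is_series_ext (fun n => G n x * (q * t) ^ n / qfact q n));
      [|apply Hx; pose proof (Rq t); lra].
    intros k; simpl. unfold a1, Gx, Rdiv. rewrite Rpow_mult_distr. ring. }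
  assert (SGqx : forall t, Rabs t < e3 -> is_series (fun k => Gqx k * t ^ k) (F t (q * x))).
  { intros t Ht. apply (is_series_ext (fun n => G n (q * x) * t ^ n / qfact q n)); [|apply Hqx; exact Ht].
    intros k; simpl. unfold Gqx, Rdiv. ring. }
  assert (SGqx2 : forall t, Rabs t < e3 ->
            is_series (fun k => q ^ k * Gqx k * t ^ k) (F (q * t) (q * x))).
  { intros t Ht. apply (is_series_ext (fun n => G n (q * x) * (q * t) ^ n / qfact q n));
      [|apply Hqx; pose proof (Rq t); lra].
    intros k; simpl. unfold Gqx, Rdiv. rewrite Rpow_mult_distr. ring. }
  assert (SH : forall t, Rabs t < e2 -> is_series (fun k => Hs k * t ^ k) (t * F (q * t) x)).
  { intros t Ht. apply is_series_decr_1.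
    pose proof (is_series_scal_l t _ _ (Sa1 t Ht)) as HH.
    unfold scal in HH; simpl in HH; unfold mult in HH; simpl in HH.
    apply (is_series_ext (fun k => t * (a1 k * t ^ k))); [intros k; simpl; ring|].
    match goal with |- is_series _ ?l => replace l with (t * F (q * t) x); [exact HH|] end.
    unfold plus, opp; simpl. ring. }
  assert (Sprod : forall t, Rabs t < e1 -> Rabs t < e2 ->
            is_series (fun k => PS_mult a1 ga k * t ^ k) (F (q * t) x * f t)).
  { intros t Ht1 Ht2. apply (ps_mult a1 ga (fun t => F (q * t) x) f e2 e1); assumption. }
  set (dl := Rmin (Rmin e1 e2) (Rmin (Rmin e3 d0) (Rmin 1 (/ (1 + Rabs x))))).
  assert (Hdl : 0 < dl).
  { unfold dl. pose proof (Rabs_pos x).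
    assert (0 < / (1 + Rabs x)) by (apply Rinv_0_lt_compat; lra).
    repeat apply Rmin_glb_lt; lra. }
  assert (Hdl' : forall t, Rabs t < dl -> Rabs t < e1 /\ Rabs t < e2 /\ Rabs t < e3 /\
                   Rabs t < d0 /\ Rabs t < 1 /\ Rabs t * Rabs x < 1).
  { intros t Ht. unfold dl in Ht.
    pose proof (Rmin_l (Rmin e1 e2) (Rmin (Rmin e3 d0) (Rmin 1 (/ (1 + Rabs x))))).
    pose proof (Rmin_r (Rmin e1 e2) (Rmin (Rmin e3 d0) (Rmin 1 (/ (1 + Rabs x))))).
    pose proof (Rmin_l e1 e2). pose proof (Rmin_r e1 e2).
    pose proof (Rmin_l (Rmin e3 d0) (Rmin 1 (/ (1 + Rabs x)))).
    pose proof (Rmin_r (Rmin e3 d0) (Rmin 1 (/ (1 + Rabs x)))).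
    pose proof (Rmin_l e3 d0). pose proof (Rmin_r e3 d0).
    pose proof (Rmin_l 1 (/ (1 + Rabs x))). pose proof (Rmin_r 1 (/ (1 + Rabs x))).
    pose proof (Rabs_pos x). pose proof (Rabs_pos t).
    assert (Rabs t * (1 + Rabs x) < 1).
    { assert (HH : Rabs t < / (1 + Rabs x)) by lra.
      apply Rmult_lt_compat_r with (r := 1 + Rabs x) in HH; [|lra].
      rewrite Rinv_l in HH by lra. exact HH. }
    repeat split; try lra. }
  assert (SM : forall t, Rabs t < dl -> is_series (fun k => M k * t ^ k) 0).
  { intros t Ht. destruct (Hdl' t Ht) as [T1 [T2 [T3 [T4 [T5 T6]]]]].
    pose proof (ser_lin2 _ _ _ _ (/ (2 * q)) (x * q - / q) (Sprod t T1 T2) (SH t T2)) as S1.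
    pose proof (ser_lin2 _ _ _ _ 1 (/ q) S1 (Sa1 t T2)) as S2.
    pose proof (ser_lin2 _ _ _ _ 1 (- / (1 - q)) S2 (SGqx t T3)) as S3.
    pose proof (ser_lin2 _ _ _ _ 1 (/ (1 - q)) S3 (SGqx2 t T3)) as S4.
    match type of S4 with is_series _ ?l => replace 0 with l end.
    - eapply is_series_ext; [|exact S4]. intros k. simpl. unfold M. field. lra.
    -
      unfold F, f.
      assert (PA : 0 < eq_exp q t) by (apply Hpos; lra).
      assert (PB : 0 < eq_exp q (q * t)) by (apply Hpos; pose proof (Rq t); lra).
      assert (Hu : Rabs (q * t * x) < 1).
      { rewrite Rabs_mult. pose proof (Rq t). pose proof (Rabs_pos x). nra. }
      replace (t * (q * x)) with (q * t * x) by ring.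
      replace (q * t * (q * x)) with (q * (q * t * x)) by ring.
      rewrite (E_shift q (q * t * x) Hq Hu).
      rewrite (E_shift q t Hq T5) in *.
      set (A := eq_exp q t) in *. set (U := eq_exp q (q * t * x)).
      field. repeat split; lra. }
  pose proof (ps_unique M dl Hdl SM) as HM0.
  set (ee := fun k => / qfact q k).
  assert (Se : forall t, Rabs t < 1 -> is_series (fun k => ee k * t ^ k) (eq_exp q t)).
  { intros t Ht. apply (is_series_ext (fun k => t ^ k / qfact q k)); [|apply E_series; assumption].
    intros k; simpl. unfold ee, Rdiv. ring. }
  set (dg := Rmin e1 (Rmin 1 d0)).
  assert (Hdg : 0 < dg) by (unfold dg; repeat apply Rmin_glb_lt; lra).
  assert (SG : forall t, Rabs t < dg ->
            is_series (fun k => (PS_mult ga ee k + ga k - cseq k) * t ^ k) 0).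
  { intros t Ht. unfold dg in Ht.
    pose proof (Rmin_l e1 (Rmin 1 d0)). pose proof (Rmin_r e1 (Rmin 1 d0)).
    pose proof (Rmin_l 1 d0). pose proof (Rmin_r 1 d0).
    pose proof (ps_mult ga ee f (eq_exp q) e1 1 Sga Se t ltac:(lra) ltac:(lra)) as P1.
    pose proof (ser_lin2 _ _ _ _ 1 1 P1 (Sga t ltac:(lra))) as P2.
    pose proof (ser_lin2 _ _ _ _ 1 (-1) P2 (is_series_c t)) as P3.
    match type of P3 with is_series _ ?l => replace 0 with l end.
    - eapply is_series_ext; [|exact P3]. intros k. simpl. ring.
    - assert (PA : 0 < eq_exp q t) by (apply Hpos; lra).
      unfold f. field. lra. }
  pose proof (ps_unique _ dg Hdg SG) as HG.
  assert (Hg0 : ga 0%nat = 0).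
  { specialize (HG 0%nat). unfold PS_mult in HG. simpl in HG. unfold ee in HG. simpl in HG.
    rewrite Rinv_1 in HG. lra. }
  assert (Hg1 : ga 1%nat = 1).
  { specialize (HG 1%nat). unfold PS_mult in HG. simpl in HG. rewrite Hg0 in HG.
    unfold ee in HG. simpl in HG. rewrite Rinv_1 in HG. lra. }
  destruct n as [|m]; [lia|].
  replace (S m - 1)%nat with m by lia.
  specialize (HM0 (S m)). unfold M in HM0.
  unfold PS_mult in HM0. rewrite tech5 in HM0.
  rewrite <- sum_lt_R0 in HM0. rewrite sum_lt_S in HM0.
  replace (S m - m)%nat with 1%nat in HM0 by lia.
  rewrite Nat.sub_diag in HM0. rewrite Hg0, Hg1 in HM0.
  rewrite (sum_lt_scale _ (fun k => a1 k * ga (S m - k)%nat) (qfact q (S m))).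
  2:{ intros k hk. unfold a1, Gx, ga, qbinom. field. split; apply Hqf. }
  unfold Hs, a1, Gx, Gqx in HM0.
  set (SS := sum_lt (fun k => a1 k * ga (S m - k)%nat) m) in *.
  unfold qint in *. simpl qfact in *. unfold qint in *.
  assert (Hqm : 1 - q * q ^ m <> 0).
  { assert (0 <= q ^ m <= 1).
    { clear -Hq. induction m; simpl; [lra|]. split; [apply Rmult_le_pos; lra| nra]. }
    nra. }
  pose proof (Hqf m) as Hfm.
  simpl pow in *.
  change (sum_lt (fun k => q ^ k * (G k x / qfact q k) * ga (S m - k)%nat) m) with SS in HM0.
  match type of HM0 with ?L = 0 => transitivity ((1 - q * q ^ m) / (1 - q) * qfact q m * L) end.
  - field. repeat split; try assumption; lra.
  - rewrite HM0. ring.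
Qed.
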